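(* Let $\beta$ be a basis set of monomials in $k[x_1,\dots,x_r]$ ($k$ algebraically closed), $R$ the coordinate ring of $U_\beta$, and $M$ the maximal ideal of $t_\beta$ in $R$. For arbitrary arrows $c^{\mathbf b}_{\mathbf j}, c^{\mathbf b_1}_{\mathbf j_1}, c^{\mathbf b_2}_{\mathbf j_2}$ for $\beta$: (a) if $c^{\mathbf b}_{\mathbf j}\equiv 0\pmod{M^2}$ then $c^{\mathbf b}_{\mathbf j}\sim0$; (b) if $c^{\mathbf b_1}_{\mathbf j_1}\equiv c^{\mathbf b_2}_{\mathbf j_2}\not\equiv0\pmod{M^2}$ then $c^{\mathbf b_1}_{\mathbf j_1}\sim c^{\mathbf b_2}_{\mathbf j_2}$.
   Context: Monomials are identified with exponent vectors. A basis set is a finite nonempty set $\beta$ of monomials closed under taking divisors; $I_\beta$ is the ideal generated by monomials not in $\beta$, $n=|\beta|$. $\mathbf H^n$ is the Hilbert scheme of $n$ points of $\mathbb A^r_k$, $t_\beta$ the point of $I_\beta$, $U_\beta\subseteq\mathbf H^n$ the open affine set of points $t$ with $\beta$ a $k$-basis of $k[\mathbf x]/I_t$, with coordinate ring $R$. For $\mathbf x^{\mathbf d}\notin\beta$, $\mathbf x^{\mathbf j}\in\beta$, $c^{\mathbf d}_{\mathbf j}\in R$ is defined by $\mathbf x^{\mathbf d}-\sum_{\mathbf j\in\beta}c^{\mathbf d}_{\mathbf j}(t)\mathbf x^{\mathbf j}\in I_t$ for $t\in U_\beta$; $M$ is generated by these functions. An arrow is a pair $(\mathbf d,\mathbf j)$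 with tail $\mathbf x^{\mathbf d}\notin\beta$ and head $\mathbf x^{\mathbf j}\in\beta$, identified with $c^{\mathbf d}_{\mathbf j}$. A translation step replaces $(\mathbf d,\mathbf j)$ by $(\mathbf d\pm e_i,\mathbf j\pm e_i)$ provided the result is again an arrow; $\sim$ is the equivalence relation generated by steps. $c\sim0$ means $c$ is translation-equivalent to an arrow $(\mathbf d',\mathbf j')$ with, for some $i$, $j'_i=0$, $d'_i\ge1$ and $\mathbf x^{\mathbf d'-e_i}\notin\beta$. *)

(* Defs.v *)
From mathcomp Require Import all_boot all_algebra finmap.
From mathcomp Require Import monalg.
From Stdlib Require Import Relations.
Set Implicit Arguments. Unset Strict Implicit. Unset Printing Implicit Defensive.
Import GRing.Theory.
Local Open Scope fset_scope.
Local Open Scope ring_scope.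

Definition mon (r : nat) := {ffun 'I_r -> nat}.

Definition ev (r : nat) (i : 'I_r) : mon r := [ffun l => nat_of_bool (l == i)].
Definition addm (r : nat) (a b : mon r) : mon r := [ffun l => (a l + b l)%N].
(* a - e_i (only used when a_i >= 1) *)
Definition subev (r : nat) (a : mon r) (i : 'I_r) : mon r :=
  [ffun l => (a l - nat_of_bool (l == i))%N].
Definition mdivides (r : nat) (m d : mon r) : bool := [forall l, (m l <= d l)%N].

Definition basis_set (r : nat) (beta : {fset mon r}) : Prop :=
  beta != fset0 /\ forall d m : mon r, d \in beta -> mdivides m d -> m \in beta.

(* an arrow (d, j): tail x^d not in beta, head x^j in beta *)
Definition is_arrow (r : nat) (beta : {fset mon r}) (a : mon r * mon r) : bool :=
  (a.1 \notin beta) && (a.2 \in beta).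

Definition tstep (r : nat) (beta : {fset mon r}) (a b : mon r * mon r) : Prop :=
  is_arrow beta a /\ is_arrow beta b /\
  exists i : 'I_r,
    (b.1 = addm a.1 (ev i) /\ b.2 = addm a.2 (ev i)) \/
    (a.1 = addm b.1 (ev i) /\ a.2 = addm b.2 (ev i)).

Definition tequiv (r : nat) (beta : {fset mon r}) : relation (mon r * mon r) :=
  clos_refl_sym_trans _ (tstep beta).

Definition sim0 (r : nat) (beta : {fset mon r}) (a : mon r * mon r) : Prop :=
  exists b : mon r * mon r, tequiv beta a b /\
    exists i : 'I_r, b.2 i = 0%N /\ (1 <= b.1 i)%N /\ subev b.1 i \notin beta.

Definition Pring (k : fieldType) (r : nat) := {malg k[cmonom (mon r * mon r)%type]}.
Definition var (k : fieldType) (r : nat) (a : (mon r * mon r)%type) : Pring k r :=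
  << ucm a >>.

(* "normal form" coefficient: coefficient of x^j in the reduction of x^m *)
Definition NF (k : fieldType) (r : nat) (beta : {fset mon r}) (m j : mon r)
  : Pring k r :=
  if m \in beta then (m == j)%:R else var k (m, j).

(* Generators of the ideal J of relations defining the coordinate ring of U_beta
   as a quotient R = k[c] / J (Haiman's presentation):
   - the multiplication operators M_i (M_i e_j = sum_q NF(j+e_i, q) e_q)
     commute;
   - x^d = x_i * x^(d - e_i) reduces consistently: c^d = M_i c^(d-e_i)
     for every d not in beta and every i with d_i >= 1;
   - variables indexed by pairs that are not arrows are 0. *)
Definition Jgen (k : fieldType) (r : nat) (beta : {fset mon r}) (p : Pring k r)
  : Prop :=
  (exists (i l : 'I_r) (j q : mon r), j \in beta /\ q \in beta /\
     p = \sum_(m <- beta) NF k beta (addm j (ev i)) m * NF k beta (addm m (ev l)) q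
       - \sum_(m <- beta) NF k beta (addm j (ev l)) m * NF k beta (addm m (ev i)) q)
  \/
  (exists (d : mon r) (i : 'I_r) (q : mon r),
     d \notin beta /\ (1 <= d i)%N /\ q \in beta /\
     p = var k (d, q)
       - \sum_(m <- beta) NF k beta (subev d i) m * NF k beta (addm m (ev i)) q)
  \/
  (exists a : mon r * mon r, ~~ is_arrow beta a /\ p = var k a).

Definition in_ideal (A : comRingType) (S : A -> Prop) (x : A) : Prop :=
  exists (n : nat) (c g : 'I_n -> A),
    (forall i, S (g i)) /\ x = \sum_(i < n) c i * g i.

(* x is 0 mod M^2 in R = k[c]/J, where M = (all c) is the maximal ideal of
   t_beta; i.e. x lies in J + (c)^2 in k[c]. *)
Definition zero_mod_M2 (k : fieldType) (r : nat) (beta : {fset mon r})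
  (x : Pring k r) : Prop :=
  in_ideal (fun p : Pring k r =>
     @Jgen k r beta p \/ exists a b, p = var k a * var k b) x.

(* Main.v *)
Require Import Defs.
From HB Require Import structures.
From mathcomp Require Import all_boot all_algebra finmap.
From mathcomp Require Import monalg.
From Stdlib Require Import Relations.
From Stdlib Require Import Classical ClassicalEpsilon.
From mathcomp Require Import zify.
Import GRing.Theory.
Local Open Scope ring_scope.
Set Implicit Arguments. Unset Strict Implicit. Unset Printing Implicit Defensive.
Section DualNum.
Variable k : fieldType.
Variable T : choiceType.
Variable f : T -> k.

Definition Nm : 'M[k]_2 := delta_mx 0 1.
Definition DN (a b : k) : 'M[k]_2 := a%:M + b *: Nm.

Lemma NmNm : Nm * Nm = 0.
Proof. by rewrite /Nm -mulmxE mul_delta_mx_cond. Qed.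

Lemma sE (a : k) : a%:M = a *: (1 : 'M[k]_2).
Proof. by rewrite scalemx1. Qed.

Lemma DN_mul a b c d : DN a b * DN c d = DN (a * c) (a * d + b * c).
Proof.
rewrite /DN (sE a) (sE c) (sE (a * c)).
rewrite mulrDl !mulrDr.
rewrite -!scalerAl -!scalerAr !scalerA.
rewrite mulr1 mul1r NmNm scaler0 addr0 scalerDl addrA.
by rewrite !mulr1.
Qed.

Lemma DN_add a b c d : DN a b + DN c d = DN (a + c) (b + d).
Proof. by rewrite /DN (sE a) (sE c) (sE (a+c)) !scalerDl addrACA. Qed.

Lemma DN_opp a b : - DN a b = DN (- a) (- b).
Proof. by rewrite /DN (sE a) (sE (-a)) opprD !scaleNr. Qed.

Lemma DN_sum (I : Type) (s : seq I) (F G : I -> k) :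
  \sum_(i <- s) DN (F i) (G i) = DN (\sum_(i <- s) F i) (\sum_(i <- s) G i).
Proof.
elim: s => [|x s IH]; first by rewrite !big_nil /DN (sE 0) !scale0r addr0.
by rewrite !big_cons IH DN_add.
Qed.

Lemma DN_01 a b : DN a b 0 1 = b.
Proof. by rewrite /DN /Nm !mxE /= mulr1n mulr1 add0r. Qed.

Definition lin (m : cmonom T) : k := \sum_(a <- finsupp m) f a.
Definition hm (m : cmonom T) : 'M[k]_2 :=
  if mdeg m == 0%N then 1 else if mdeg m == 1%N then lin m *: Nm else 0.

Lemma hm_mult : mmorphism hm.
Proof.
split; last by rewrite /hm mdeg1.
move=> m1 m2; rewrite /hm mdegM.
case: (eqVneq (mdeg m1) 0%N) => [/eqP|] h1.
  by rewrite mdeg_eq0 in h1; rewrite (eqP h1) mdeg1 add0n mul1m mul1r.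
case: (eqVneq (mdeg m2) 0%N) => [/eqP|] h2.
  by rewrite mdeg_eq0 in h2; rewrite (eqP h2) mdeg1 addn0 mulm1 mulr1 (negbTE h1).
have -> : (mdeg m1 + mdeg m2 == 0)%N = false by lia.
have -> : (mdeg m1 + mdeg m2 == 1)%N = false by lia.

case: ifP => _; last by rewrite mul0r.
case: ifP => _; last by rewrite mulr0.
by rewrite -scalerAl -scalerAr NmNm !scaler0.
Qed.

HB.instance Definition _ := monalg.isMultiplicative.Build (cmonom T) 'M[k]_2 hm hm_mult.

Definition Ev (p : {malg k[cmonom T]}) : 'M[k]_2 := mmap (@scalar_mx k 2) hm p.

Lemma Ev_mul p q : Ev (p * q) = Ev p * Ev q.
Proof.
have := @commr_mmap_is_multiplicative (cmonom T) k 'M[k]_2 (@scalar_mx k 2) hm.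
case=> [g m m'|H _]; last exact: H.
by rewrite /GRing.comm -!mulmxE scalar_mxC.
Qed.

Lemma Ev_add p q : Ev (p + q) = Ev p + Ev q.
Proof. exact: mmapD. Qed.
Lemma Ev_opp p : Ev (- p) = - Ev p.
Proof. exact: mmapN. Qed.
Lemma Ev_sub p q : Ev (p - q) = Ev p - Ev q.
Proof. exact: mmapB. Qed.
Lemma Ev_sum (I : Type) (s : seq I) (F : I -> {malg k[cmonom T]}) :
  Ev (\sum_(i <- s) F i) = \sum_(i <- s) Ev (F i).
Proof.
elim: s => [|x s IH]; first by rewrite !big_nil /Ev mmap0.
by rewrite !big_cons Ev_add IH.
Qed.
Lemma Ev_nat n : Ev (n%:R) = DN (n%:R) 0.
Proof.
rewrite /DN scale0r addr0 /Ev.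
have -> : (n%:R : {malg k[cmonom T]}) = (n%:R : k)%:MP.
  by rewrite rmorph_nat.
by rewrite mmapU /hm mdeg1 mulr1.
Qed.
Lemma Ev_var a : Ev << ucm a >> = DN 0 (f a).
Proof.
rewrite /Ev mmapU /hm mdegU /= /lin mdomU big_seq_fset1 /DN.
by rewrite (sE 1) (sE 0) scale1r scale0r mul1r add0r.
Qed.
End DualNum.
Section Mon.
Variable r : nat.
Implicit Types x y q : mon r.

Lemma addmC' x i l : addm (addm x (ev i)) (ev l) = addm (addm x (ev l)) (ev i).
Proof. by apply/ffunP => t; rewrite !ffunE addnAC. Qed.

Lemma subev_add x i : subev (addm x (ev i)) i = x.
Proof. by apply/ffunP => t; rewrite !ffunE addnK. Qed.

Lemma add_subev y i : (0 < y i)%N -> addm (subev y i) (ev i) = y.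
Proof.
move=> h; apply/ffunP => t; rewrite !ffunE.
case: (eqVneq t i) => [->|_] /=; first by rewrite subnK.
by rewrite subn0 addn0.
Qed.

Lemma addm_i x i : addm x (ev i) i = (x i).+1.
Proof. by rewrite !ffunE eqxx addn1. Qed.

Lemma addm_eq x i q : (addm x (ev i) == q) = (0 < q i)%N && (x == subev q i).
Proof.
apply/eqP/andP => [<-|[h /eqP ->]]; last exact: add_subev.
by rewrite addm_i subev_add.
Qed.

Lemma addm_inj x y i : addm x (ev i) = addm y (ev i) -> x = y.
Proof. by move=> h; rewrite -(subev_add x i) h subev_add. Qed.

Variable beta : {fset mon r}.
Hypothesis Hb : basis_set beta.

Lemma in_subev y i : y \in beta -> subev y i \in beta.
Proof.
move=> hy; apply: (proj2 Hb _ _ hy); apply/forallP => t; rewrite ffunE.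
exact: leq_subr.
Qed.

Lemma notin_add x i : x \notin beta -> addm x (ev i) \notin beta.
Proof.
apply: contra => hy; apply: (proj2 Hb _ _ hy); apply/forallP => t; rewrite ffunE.
exact: leq_addr.
Qed.

Lemma S1 (V : pzRingType) x (G : mon r -> V) : x \in beta ->
  \sum_(m <- beta) (x == m)%:R * G m = G x.
Proof.
move=> hx; rewrite (bigD1_seq x) //= ?fset_uniq // eqxx mul1r big1 ?addr0 //.
by move=> m; rewrite eq_sym => /negbTE ->; rewrite mul0r.
Qed.

Lemma S2 (V : pzRingType) l q (G : mon r -> V) : q \in beta ->
  \sum_(m <- beta) G m * (addm m (ev l) == q)%:R =
  if (0 < q l)%N then G (subev q l) else 0.
Proof.
move=> hq; case: ifP => hl.
  rewrite (bigD1_seq (subev q l)) //= ?fset_uniq ?in_subev //.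
  rewrite addm_eq hl eqxx mulr1 big1 ?addr0 //.
  by move=> m /negbTE; rewrite addm_eq hl => ->; rewrite mulr0.
by rewrite big1 // => m _; rewrite addm_eq hl mulr0.
Qed.

Lemma in_addm_eq x l q : q \in beta -> addm x (ev l) == q ->
   addm x (ev l) \in beta.
Proof. by move=> hq /eqP ->. Qed.
End Mon.
Lemma DN00 (k : fieldType) : DN 0 (0 : k) = 0.
Proof. by rewrite /DN (sE 0) !scale0r addr0. Qed.

Lemma DN0_eq0 (k : fieldType) (b : k) : DN 0 b = 0 -> b = 0.
Proof. by move=> h; rewrite -(DN_01 0 b) h mxE. Qed.

Section Funct.
Variable k : fieldType.
Variable r : nat.
Variable beta : {fset mon r}.
Hypothesis Hb : basis_set beta.
Variable f : mon r * mon r -> k.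
Hypothesis Hna : forall a, ~~ is_arrow beta a -> f a = 0.
Hypothesis Hst : forall a b, tstep beta a b -> f a = f b.
Hypothesis Hs0 : forall a, sim0 beta a -> f a = 0.

Definition e0 m j : k := if m \in beta then (m == j)%:R else 0.
Definition e1 m j : k := if m \in beta then 0 else f (m, j).

Local Notation E := (Ev f).
Local Notation TT := (mon r * mon r)%type.

Lemma EvP_mul (p q : Pring k r) : E (p * q) = E p * E q.
Proof. exact: (@Ev_mul k TT f p q). Qed.
Lemma EvP_add (p q : Pring k r) : E (p + q) = E p + E q.
Proof. exact: (@Ev_add k TT f p q). Qed.
Lemma EvP_sub (p q : Pring k r) : E (p - q) = E p - E q.
Proof. exact: (@Ev_sub k TT f p q). Qed.
Lemma EvP_sum (I : Type) (s : seq I) (F : I -> Pring k r) :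
  E (\sum_(i <- s) F i) = \sum_(i <- s) E (F i).
Proof. exact: (@Ev_sum k TT f I s F). Qed.
Lemma EvP_var a : E (var k a) = DN 0 (f a).
Proof. exact: (@Ev_var k TT f a). Qed.
Lemma EvP_0 : E (0 : Pring k r) = 0.
Proof. exact: mmap0. Qed.
Lemma EvP_nat n : E (n%:R : Pring k r) = DN (n%:R) 0.
Proof. exact: (@Ev_nat k TT f n). Qed.

Lemma Ev_NF m j : E (NF k beta m j) = DN (e0 m j) (e1 m j).
Proof.
rewrite /NF /e0 /e1; case: ifP => _; first by rewrite EvP_nat.
by rewrite EvP_var.
Qed.

Lemma e0q y q : q \in beta -> e0 y q = (y == q)%:R.
Proof.
move=> hq; rewrite /e0; case: ifP => hy //.
by case: eqP => // e; rewrite e hq in hy.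
Qed.

Lemma Klem x l y : x \notin beta -> y \in beta ->
  (if (0 < y l)%N then f (x, subev y l) else 0) = f (addm x (ev l), y).
Proof.
move=> hx hy; case: ifP => hl.
  apply: Hst; split; first by rewrite /is_arrow /= hx in_subev.
  split; first by rewrite /is_arrow /= hy notin_add.
  by exists l; left; split => //=; rewrite add_subev.
apply/esym/Hs0; exists (addm x (ev l), y); split; first exact: rst_refl.
exists l => /=; split; first by move/negbT: hl; rewrite -eqn0Ngt => /eqP.
by rewrite addm_i subev_add.
Qed.

Lemma stepm x m l q : E (NF k beta x m * NF k beta (addm m (ev l)) q) =
  DN (e0 x m * e0 (addm m (ev l)) q)
     (e0 x m * e1 (addm m (ev l)) q + e1 x m * e0 (addm m (ev l)) q).
Proof.
rewrite EvP_mul.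
exact: (etrans (f_equal2 _ (Ev_NF _ _) (Ev_NF _ _)) (DN_mul _ _ _ _)).
Qed.

Lemma key x l q : q \in beta ->
  E (\sum_(m <- beta) NF k beta x m * NF k beta (addm m (ev l)) q) =
  DN (e0 (addm x (ev l)) q) (e1 (addm x (ev l)) q).
Proof.
move=> hq; rewrite EvP_sum (eq_bigr _ (fun m _ => stepm x m l q)) DN_sum.
congr DN.
  case hx: (x \in beta).
    rewrite (eq_bigr (fun m => (x == m)%:R * e0 (addm m (ev l)) q)); last first.
      by move=> m _; rewrite /e0 hx.
    by rewrite S1.
  rewrite big1; last by move=> m _; rewrite /e0 hx mul0r.
  by rewrite /e0 (negbTE (notin_add Hb l (negbT hx))).
case hx: (x \in beta).
  rewrite (eq_bigr (fun m => (x == m)%:R * e1 (addm m (ev l)) q)); last first.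
    by move=> m _; rewrite /e0 /e1 hx mul0r addr0.
  by rewrite S1.
rewrite (eq_bigr (fun m => f (x, m) * (addm m (ev l) == q)%:R)); last first.
  by move=> m _; rewrite (e0q (addm m (ev l)) hq) /e0 /e1 hx mul0r add0r.
rewrite S2 // Klem ?hx //.
by rewrite /e1 (negbTE (notin_add Hb l (negbT hx))).
Qed.

Definition Sgen (p : Pring k r) :=
  @Jgen k r beta p \/ exists a b, p = var k a * var k b.

Lemma g1 i l j q : q \in beta ->
  E (\sum_(m <- beta) NF k beta (addm j (ev i)) m * NF k beta (addm m (ev l)) q
       - \sum_(m <- beta) NF k beta (addm j (ev l)) m * NF k beta (addm m (ev i)) q) = 0.
Proof.
move=> hq.
have h1 := key (addm j (ev i)) l hq.
have h2 := key (addm j (ev l)) i hq.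
rewrite addmC' in h1.
exact: (etrans (EvP_sub _ _) (etrans (f_equal2 (fun u v => u - v) h1 h2) (subrr _))).
Qed.

Lemma g2 d i q : d \notin beta -> (1 <= d i)%N -> q \in beta ->
  E (var k (d, q) - \sum_(m <- beta) NF k beta (subev d i) m * NF k beta (addm m (ev i)) q) = 0.
Proof.
move=> hd hi hq.
have h := key (subev d i) i hq.
rewrite add_subev // /e0 /e1 (negbTE hd) in h.
exact: (etrans (EvP_sub _ _) (etrans (f_equal2 (fun u v => u - v) (EvP_var _) h) (subrr _))).
Qed.

Lemma g3 a : ~~ is_arrow beta a -> E (var k a) = 0.
Proof. move=> ha; apply: etrans (EvP_var a) _; by rewrite Hna // DN00. Qed.

Lemma g4 a b : E (var k a * var k b) = 0.
Proof.
apply: etrans (EvP_mul _ _) _.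
apply: etrans (f_equal2 *%R (EvP_var a) (EvP_var b)) _.
by rewrite DN_mul !mul0r mulr0 addr0 DN00.
Qed.

Lemma gen0 p : Sgen p -> E p = 0.
Proof.
case=> [[|[]]|].
- by case=> i [l [j [q [hj [hq ->]]]]]; apply: g1.
- by case=> d [i [q [hd [hi [hq ->]]]]]; apply: g2.
- by case=> a [ha ->]; apply: g3.
- by case=> a [b ->]; apply: g4.
Qed.

Lemma Ev_ideal x : zero_mod_M2 beta x -> E x = 0.
Proof.
case=> n [c [g [Hg ->]]].
apply: (big_ind (fun y => E y = 0)).
- exact: EvP_0.
- by move=> u v hu hv; rewrite EvP_add hu hv addr0.
- move=> i _; apply: etrans (EvP_mul _ _) _.
  by have h := gen0 (Hg i); rewrite h mulr0.
Qed.
End Funct.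
Section Ideal.
Variable A : comRingType.
Variable S : A -> Prop.

Lemma in0 : in_ideal S 0.
Proof.
exists 0%N, (fun _ => 0), (fun _ => 0); split; first by case.
by rewrite big_ord0.
Qed.

Lemma inS g : S g -> in_ideal S g.
Proof.
move=> hg; exists 1%N, (fun _ => 1), (fun _ => g); split => //.
by rewrite big_ord1 mul1r.
Qed.

Lemma inD x y : in_ideal S x -> in_ideal S y -> in_ideal S (x + y).
Proof.
case=> n1 [c1 [g1 [h1 ->]]] [n2 [c2 [g2 [h2 ->]]]].
exists (n1 + n2)%N,
  (fun i => match split i with inl a => c1 a | inr b => c2 b end),
  (fun i => match split i with inl a => g1 a | inr b => g2 b end).
split; first by move=> i; case: (split i).
rewrite big_split_ord /=; congr (_ + _); apply: eq_bigr => i _.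
  by rewrite (unsplitK (inl i)).
by rewrite (unsplitK (inr i)).
Qed.

Lemma inM a x : in_ideal S x -> in_ideal S (a * x).
Proof.
case=> n [c [g [h ->]]]; exists n, (fun i => a * c i), g; split => //.
by rewrite big_distrr /=; apply: eq_bigr => i _; rewrite mulrA.
Qed.

Lemma inN x : in_ideal S x -> in_ideal S (- x).
Proof. by move=> h; rewrite -mulN1r; apply: inM. Qed.

Lemma inB x y : in_ideal S x -> in_ideal S y -> in_ideal S (x - y).
Proof. by move=> hx hy; apply: inD => //; apply: inN. Qed.

Lemma in_sum (I : Type) (s : seq I) (F : I -> A) :
  (forall i, in_ideal S (F i)) -> in_ideal S (\sum_(i <- s) F i).
Proof.
move=> h; apply: (big_ind (fun y => in_ideal S y)) => //.
- exact: in0.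
- exact: inD.
Qed.
Lemma inC u c c' : c = c' -> in_ideal S (u * c - c' * u).
Proof. by move=> ->; rewrite mulrC subrr; apply: in0. Qed.

Lemma in_sub0 x w : in_ideal S x -> in_ideal S (x - 0 * w).
Proof. by rewrite mul0r subr0. Qed.

Lemma in_mul0 u : in_ideal S (u * 0).
Proof. by rewrite mulr0; apply: in0. Qed.

Lemma in_add_sub u v : in_ideal S (u - v) -> in_ideal S v -> in_ideal S u.
Proof. by move=> h1 h2; rewrite -(subrK v u); apply: inD. Qed.

Lemma in_sub_split u v w : in_ideal S (u - w) -> in_ideal S (w - v) ->
  in_ideal S (u - v).
Proof. by move=> h1 h2; rewrite -(subrK w u) -addrA; apply: inD. Qed.
Lemma in_subrr u : in_ideal S (u - u).
Proof. by rewrite subrr; apply: in0. Qed.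

Lemma in_opp_sub u v : in_ideal S (u - v) -> in_ideal S (v - u).
Proof. by move=> h; rewrite -opprB; apply: inN. Qed.
End Ideal.
Section Zlem.
Variable k : fieldType.
Variable r : nat.
Variable beta : {fset mon r}.
Hypothesis Hb : basis_set beta.

Local Notation SS := (fun p : Pring k r =>
     @Jgen k r beta p \/ exists a b, p = var k a * var k b).

Lemma inVV a b : in_ideal SS (var k a * var k b).
Proof. by apply: inS; right; exists a, b. Qed.

Lemma addm_eq2 (m y : mon r) i : (addm m (ev i) == addm y (ev i)) = (m == y).
Proof.
by apply/eqP/eqP => [/addm_inj|->].
Qed.

Lemma Zstep (x y : mon r) i : x \notin beta -> addm y (ev i) \in beta ->
  in_ideal SS (var k (addm x (ev i), addm y (ev i)) - var k (x, y)).
Proof.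
move=> hx hq.
have hy : y \in beta.
  by apply: (proj2 Hb _ _ hq); apply/forallP => t; rewrite ffunE leq_addr.
set q := addm y (ev i).
set Sg := \sum_(m <- beta) NF k beta (subev (addm x (ev i)) i) m
             * NF k beta (addm m (ev i)) q.
have hg : in_ideal SS (var k (addm x (ev i), q) - Sg).
  apply: inS; left; right; left.
  exists (addm x (ev i)), i, q; split; first exact: notin_add.
  by split; [rewrite addm_i | split].
have -> : var k (addm x (ev i), q) - var k (x, y) =
          (var k (addm x (ev i), q) - Sg) + (Sg - var k (x, y)).
  by rewrite addrA subrK.
apply: inD => //.
rewrite /Sg subev_add.
rewrite -(S1 (fun m => var k (x, m)) hy).
rewrite -sumrB.
apply: in_sum => m.
rewrite {1}/NF (negbTE hx) /NF.
case: ifP => hm.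
  rewrite /q addm_eq2.
  by apply: inC; rewrite eq_sym.
have -> : (y == m) = false.
  by apply/negbTE; apply: contraFneq hm => <-.
apply: in_sub0; apply: inVV.
Qed.

Lemma Zsim0 (x y : mon r) i : (y i = 0)%N -> (1 <= x i)%N -> subev x i \notin beta ->
  y \in beta -> in_ideal SS (var k (x, y)).
Proof.
move=> hyi hxi hs hy.
have hx : x \notin beta.
  apply: contra hs => hx; exact: in_subev.
set Sg := \sum_(m <- beta) NF k beta (subev x i) m * NF k beta (addm m (ev i)) y.
have hg : in_ideal SS (var k (x, y) - Sg).
  apply: inS; left; right; left.
  by exists x, i, y.
apply: (in_add_sub hg).
apply: in_sum => m.
rewrite {1}/NF (negbTE hs) /NF.
case: ifP => hm; last exact: inVV.
have -> : (addm m (ev i) == y) = false.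
  by apply/negbTE/eqP => e; move: hyi; rewrite -e addm_i.
exact: in_mul0.
Qed.

Lemma Ztequiv a b : tequiv beta a b -> in_ideal SS (var k a - var k b).
Proof.
elim=> {a b}.
- move=> [x y] [x' y'] [ha [hb [i [[/= e1 e2]|[/= e1 e2]]]]]; subst.
    apply: in_opp_sub; apply: Zstep.
      by case/andP: ha.
    by case/andP: hb.
  apply: Zstep; first by case/andP: hb.
  by case/andP: ha.
- by move=> a; apply: in_subrr.
- by move=> a b _ h; apply: in_opp_sub.
- move=> a b c _ h1 _ h2; exact: in_sub_split h1 h2.
Qed.

Lemma teq_arrow a b : tequiv beta a b -> is_arrow beta a = is_arrow beta b.
Proof.
elim=> {a b}.
- by move=> a b [ha [hb _]]; rewrite ha hb.
- by [].
- by move=> a b _ ->.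
- by move=> a b c _ -> _ ->.
Qed.

Lemma Zsim a : is_arrow beta a -> sim0 beta a -> zero_mod_M2 beta (var k a).
Proof.
move=> ha [[x y] [hab [i [/= h1 [h2 h3]]]]].
have hb : is_arrow beta (x, y) by rewrite -(teq_arrow hab).
have hy : y \in beta by case/andP: hb.
apply: (in_add_sub (Ztequiv hab)).
exact: (Zsim0 h1 h2 h3 hy).
Qed.
End Zlem.
Section Main.
Variable k : fieldType.
Variable r : nat.
Variable beta : {fset mon r}.
Hypothesis Hb : basis_set beta.
Variable a0 : mon r * mon r.
Hypothesis ha0 : is_arrow beta a0.
Hypothesis hn : ~ sim0 beta a0.

Definition fcl (b : mon r * mon r) : k :=
  if excluded_middle_informative (is_arrow beta b /\ tequiv beta a0 b) then 1 else 0.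

Lemma fclP b : (is_arrow beta b /\ tequiv beta a0 b /\ fcl b = 1) \/
  (~ (is_arrow beta b /\ tequiv beta a0 b) /\ fcl b = 0).
Proof.
rewrite /fcl; destruct (excluded_middle_informative (is_arrow beta b /\ tequiv beta a0 b)) as [[h1 h2]|h].
  by left.
by right.
Qed.

Lemma fHna b : ~~ is_arrow beta b -> fcl b = 0.
Proof.
move=> hb; case: (fclP b) => [[h _]|[_ ->]] //.
by rewrite h in hb.
Qed.

Lemma fHst b c : tstep beta b c -> fcl b = fcl c.
Proof.
move=> hbc; have [hb [hc _]] := hbc.
case: (fclP b) => [[_ [h1 ->]]|[h1 ->]]; case: (fclP c) => [[_ [h2 ->]]|[h2 ->]] //.
- exfalso; apply: h2; split => //; apply: rst_trans h1 _; exact: rst_step.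
- exfalso; apply: h1; split => //; apply: rst_trans h2 _; apply: rst_sym; exact: rst_step.
Qed.

Lemma fHs0 b : sim0 beta b -> fcl b = 0.
Proof.
move=> [c [hbc hc]]; case: (fclP b) => [[_ [h _]]|[_ ->]] //.
exfalso; apply: hn; exists c; split => //; exact: rst_trans h hbc.
Qed.

Lemma fcl_a0 : fcl a0 = 1.
Proof.
case: (fclP a0) => [[_ [_ ->]]|[h _]] //.
by exfalso; apply: h; split => //; apply: rst_refl.
Qed.

Lemma fcl1 b : fcl b = 1 -> tequiv beta a0 b.
Proof.
case: (fclP b) => [[_ [h _]] //|[_ ->] /esym/eqP].
by rewrite oner_eq0.
Qed.

Lemma fcl_ideal x : zero_mod_M2 beta x -> Ev fcl x = 0.
Proof. exact: (Ev_ideal Hb fHna fHst fHs0). Qed.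
End Main.

Unset Implicit Arguments.
Set Strict Implicit.

Theorem corollary3p5 (k : closedFieldType) (r : nat) (beta : {fset mon r}) :
  basis_set beta ->
  (forall a : mon r * mon r, is_arrow beta a ->
     zero_mod_M2 beta (var k a) -> sim0 beta a) /\
  (forall a1 a2 : mon r * mon r, is_arrow beta a1 -> is_arrow beta a2 ->
     zero_mod_M2 beta (var k a1 - var k a2) ->
     ~ zero_mod_M2 beta (var k a1) ->
     tequiv beta a1 a2).
Proof.
move=> Hb; split.
  move=> a ha hz; apply: NNPP => hn.
  have h := fcl_ideal Hb hn hz.
  have h2 := etrans (esym (EvP_var _ a)) h.
  have := DN0_eq0 h2; rewrite (fcl_a0 k ha) => /eqP.
  by rewrite oner_eq0.
move=> a1 a2 h1 h2 hz hnz.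
have hn : ~ sim0 beta a1 by move=> hs; apply: hnz; exact: (Zsim k Hb h1 hs).
have h := fcl_ideal Hb hn hz.
have h' := etrans (esym (EvP_sub _ _ _)) h.
have h'' := etrans (f_equal2 (fun u v => u - v) (esym (EvP_var _ a1)) (esym (EvP_var _ a2))) h'.
rewrite DN_opp DN_add oppr0 addr0 in h''.
move/DN0_eq0/eqP: h''; rewrite subr_eq0 (fcl_a0 k h1) => /eqP /esym e.
exact: fcl1 e.
Qed.
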